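(* For every positive integer $n$ that is a perfect square, there exist two sets $A_1,A_2$ of $n$ lines each in $\mathbb{R}^2$ such that for every line $\ell$ there are $i\in\{1,2\}$ and a closed halfplane $\ell^\sigma$ bounded by $\ell$ such that every subset $A'\subseteq A_i$ with $V(A')\subseteq\ell^\sigma$ satisfies $|A'|\le\sqrt{n}$.
   Context: For a finite set $A$ of lines in $\mathbb{R}^2$, $V(A)$ denotes the set of all intersection points of pairs of lines of $A$. *)

(* Defs.v *)
From Stdlib Require Import Reals List.
Import ListNotations.
Open Scope R_scope.

(* A line in R^2, given by coefficients (a,b,c): { (x,y) | a x + b y = c },
   valid when (a,b) <> (0,0). *)
Record line := mkLine { la : R; lb : R; lc : R }.

Definition valid_line (L : line) : Prop := la L <> 0 \/ lb L <> 0.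

Definition on_line (L : line) (p : R * R) : Prop :=
  la L * fst p + lb L * snd p = lc L.

Definition same_line (L1 L2 : line) : Prop :=
  forall p, on_line L1 p <-> on_line L2 p.

Definition line_set (A : list line) : Prop :=
  (forall L, In L A -> valid_line L) /\
  NoDup A /\
  (forall L1 L2, In L1 A -> In L2 A -> L1 <> L2 -> ~ same_line L1 L2).

Definition V (A : list line) (p : R * R) : Prop :=
  exists L1 L2, In L1 A /\ In L2 A /\ ~ same_line L1 L2 /\
                on_line L1 p /\ on_line L2 p.

Definition closed_halfplane (L : line) (s : bool) (p : R * R) : Prop :=
  if s then la L * fst p + lb L * snd p >= lc L
  else la L * fst p + lb L * snd p <= lc L.

(* Main.v *)
Require Import Defs.
From Stdlib Require Import Reals List Lia Arith Lra.
Open Scope R_scope.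

Definition g1 (i : nat) : line := mkLine (INR i + 1) (-1) 0.
Definition g2 (k i : nat) : line :=
  mkLine (INR i + 1) (-1) ((INR i + 1) * (INR (i / k) + 1)).

Lemma same_line_la (L1 L2 : line) :
  lb L1 = -1 -> lb L2 = -1 -> same_line L1 L2 -> la L1 = la L2.
Proof.
  intros H1 H2 S.
  destruct L1 as [s1 b1 c1], L2 as [s2 b2 c2]; simpl in *; subst.
  pose proof (proj1 (S (0, -c1))) as P0.
  pose proof (proj1 (S (1, s1 - c1))) as P1.
  unfold on_line in P0, P1; simpl in *.
  assert (E0 : s2 * 0 + -1 * - c1 = c2) by (apply P0; ring).
  assert (E1 : s2 * 1 + -1 * (s1 - c1) = c2) by (apply P1; ring).
  lra.
Qed.

Lemma not_same (g : nat -> line) i j :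
  (forall i, lb (g i) = -1) -> (forall i, la (g i) = INR i + 1) ->
  i <> j -> ~ same_line (g i) (g j).
Proof.
  intros Hb Ha Hij S. apply same_line_la in S; auto.
  rewrite !Ha in S. apply Hij. apply INR_eq. lra.
Qed.

Lemma line_set_map (g : nat -> line) n :
  (forall i, lb (g i) = -1) -> (forall i, la (g i) = INR i + 1) ->
  line_set (map g (seq 0 n)).
Proof.
  intros Hb Ha. split; [|split].
  - intros L HL. apply in_map_iff in HL. destruct HL as [i [<- _]].
    right. rewrite Hb. lra.
  - apply NoDup_map_NoDup_ForallPairs; [|apply seq_NoDup].
    intros i j _ _ E. apply INR_eq. assert (la (g i) = la (g j)) by now rewrite E.
    rewrite !Ha in H. lra.
  - intros L1 L2 H1 H2 Hne.
    apply in_map_iff in H1. destruct H1 as [i [<- _]].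
    apply in_map_iff in H2. destruct H2 as [j [<- _]].
    apply not_same; auto; intros ->; now apply Hne.
Qed.

Lemma pullback {A : Type} (g : nat -> A) (A' : list A) (S : list nat) :
  incl A' (map g S) -> exists I, A' = map g I /\ incl I S.
Proof.
  induction A' as [|x A' IH]; intros Hi.
  - exists nil. split; [reflexivity | intros a []].
  - destruct IH as [I [E HI]]. { intros y Hy. apply Hi. now right. }
    assert (Hx : In x (map g S)) by (apply Hi; now left).
    apply in_map_iff in Hx. destruct Hx as [i [Hgi Hi']].
    exists (i :: I). split.
    + simpl. now rewrite Hgi, E.
    + intros y [<-|Hy]; auto.
Qed.

Lemma count_le (I : list nat) (f : nat -> nat) m :
  NoDup I -> (forall i j, In i I -> In j I -> f i = f j -> i = j) ->
  (forall i, In i I -> (f i < m)%nat) -> (length I <= m)%nat.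
Proof.
  intros ND Hf Hb.
  rewrite <- (length_map f I), <- (length_seq m 0).
  apply NoDup_incl_length.
  - apply NoDup_map_NoDup_ForallPairs; auto.
  - intros y Hy. apply in_map_iff in Hy. destruct Hy as [i [<- Hi]].
    apply in_seq. specialize (Hb i Hi). lia.
Qed.

Lemma inter_exists s1 s2 c1 c2 : s1 <> s2 ->
  exists p, on_line (mkLine s1 (-1) c1) p /\ on_line (mkLine s2 (-1) c2) p.
Proof.
  intros Hs. set (x := (c1 - c2) / (s1 - s2)).
  assert (E : x * (s1 - s2) = c1 - c2) by (unfold x; field; lra).
  exists (x, s1 * x - c1). unfold on_line; simpl. split; lra.
Qed.

Lemma cross_lt (k i j : nat) (p : R * R) : (i < j)%nat -> (i / k < j / k)%nat ->
  on_line (g2 k i) p -> on_line (g2 k j) p -> snd p > 0.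
Proof.
  intros Hij Hd H1 H2. unfold on_line, g2 in *; simpl in *.
  destruct p as [x y]; simpl in *.
  set (s1 := INR i + 1) in *. set (s2 := INR j + 1) in *.
  set (q1 := INR (i / k) + 1) in *. set (q2 := INR (j / k) + 1) in *.
  assert (Hs : s1 < s2) by (unfold s1, s2; apply lt_INR in Hij; lra).
  assert (Hq : q1 < q2) by (unfold q1, q2; apply lt_INR in Hd; lra).
  assert (Hs1 : 0 < s1) by (unfold s1; pose proof (pos_INR i); lra).
  assert (E : y * (s1 - s2) = s1 * s2 * (q1 - q2)).
  { replace (y * (s1 - s2)) with (s2 * (s1 * x - y) - s1 * (s2 * x - y)) by ring.
    replace (s2 * x - y) with (s2 * q2) by lra.
    replace (s1 * x - y) with (s1 * q1) by lra. ring. }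
  assert (P : s1 * s2 > 0) by (apply Rmult_lt_0_compat; lra).
  assert (N : s1 * s2 * (q1 - q2) < 0).
  { assert (s1 * s2 * (q2 - q1) > 0) by (apply Rmult_lt_0_compat; lra). lra. }
  destruct (Rle_lt_dec y 0) as [Hy|Hy]; [|lra].
  assert (y * (s1 - s2) >= 0) by nra. lra.
Qed.

Lemma cross (k i j : nat) (p : R * R) : (k <> 0)%nat -> i <> j -> (i / k)%nat <> (j / k)%nat ->
  on_line (g2 k i) p -> on_line (g2 k j) p -> snd p > 0.
Proof.
  intros Hk Hij Hd H1 H2.
  destruct (Nat.lt_total i j) as [L|[L|L]]; [|contradiction|].
  - assert (i / k <= j / k)%nat by (apply Nat.Div0.div_le_mono; lia).
    apply (cross_lt k i j); auto; lia.
  - assert (j / k <= i / k)%nat by (apply Nat.Div0.div_le_mono; lia).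
    apply (cross_lt k j i); auto; lia.
Qed.

Theorem mainTheorem4 :
  forall (n k : nat), (0 < n)%nat -> n = (k * k)%nat ->
  exists A1 A2 : list line,
    line_set A1 /\ length A1 = n /\
    line_set A2 /\ length A2 = n /\
    forall l : line, valid_line l ->
      exists (A : list line) (s : bool),
        (A = A1 \/ A = A2) /\
        forall A' : list line,
          NoDup A' -> incl A' A ->
          (forall p, V A' p -> closed_halfplane l s p) ->
          (length A' <= k)%nat.
Proof.
  intros n k Hn Hnk.
  assert (Hk : k <> 0%nat) by (intros ->; simpl in Hnk; lia).
  exists (map g1 (seq 0 n)), (map (g2 k) (seq 0 n)).
  split; [apply line_set_map; reflexivity|].
  split; [now rewrite length_map, length_seq|].
  split; [apply line_set_map; reflexivity|].
  split; [now rewrite length_map, length_seq|].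
  intros [a b c] Hl.
  destruct (Req_dec c 0) as [Hc|Hc].
  - subst c. destruct (Req_dec a 0) as [Ha|Ha].
    + subst a. destruct Hl as [Hl|Hl]; [simpl in Hl; lra|]. simpl in Hl.
      exists (map (g2 k) (seq 0 n)), (if Rlt_dec 0 b then false else true).
      split; [now right|].
      intros A' ND Hi HV. destruct (pullback _ _ _ Hi) as [I [-> HI]].
      apply NoDup_map_inv in ND. rewrite length_map.
      apply (count_le I (fun i => i mod k)); auto.
      * intros i j Hi' Hj' E.
        destruct (Nat.eq_dec i j) as [|Hne]; auto.
        destruct (Nat.eq_dec (i / k) (j / k)) as [Ed|Ed].
        { rewrite (Nat.div_mod_eq i k), (Nat.div_mod_eq j k), Ed, E. reflexivity. }
        exfalso.
        destruct (inter_exists (INR i + 1) (INR j + 1)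
                    ((INR i + 1) * (INR (i / k) + 1))
                    ((INR j + 1) * (INR (j / k) + 1))) as [p [P1 P2]].
        { intros Q. apply Hne, INR_eq. lra. }
        assert (Hy := cross k i j p Hk Hne Ed P1 P2).
        assert (Hp : V (map (g2 k) I) p).
        { exists (g2 k i), (g2 k j). repeat split; auto.
          - now apply in_map. - now apply in_map.
          - apply not_same; auto. }
        specialize (HV p Hp). unfold closed_halfplane in HV; simpl in HV.
        destruct (Rlt_dec 0 b); nra.
      * intros i _. now apply Nat.mod_upper_bound.
    + exists (map (g2 k) (seq 0 n)), (if Rlt_dec 0 a then false else true).
      split; [now right|].
      intros A' ND Hi HV. destruct (pullback _ _ _ Hi) as [I [-> HI]].
      apply NoDup_map_inv in ND. rewrite length_map.
      apply (count_le I (fun i => (i / k)%nat)); auto.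
      * intros i j Hi' Hj' E.
        destruct (Nat.eq_dec i j) as [|Hne]; auto. exfalso.
        set (q := INR (i / k) + 1).
        assert (Hp : V (map (g2 k) I) (q, 0)).
        { exists (g2 k i), (g2 k j). repeat split; auto.
          - now apply in_map. - now apply in_map.
          - apply not_same; auto.
          - unfold on_line, g2, q; simpl. ring.
          - unfold on_line, g2, q; simpl. rewrite E. ring. }
        specialize (HV _ Hp). unfold closed_halfplane in HV; simpl in HV.
        assert (q >= 1) by (unfold q; pose proof (pos_INR (i / k)); lra).
        destruct (Rlt_dec 0 a); nra.
      * intros i Hi'. apply HI, in_seq in Hi'.
        apply Nat.Div0.div_lt_upper_bound; lia.
  - exists (map g1 (seq 0 n)), (if Rlt_dec 0 c then true else false).
    split; [now left|].
    intros A' ND Hi HV. destruct (pullback _ _ _ Hi) as [I [-> HI]].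
    apply NoDup_map_inv in ND. rewrite length_map.
    enough (length I <= 1)%nat by lia.
    apply (count_le I (fun _ => 0%nat)); auto.
    intros i j Hi' Hj' _.
    destruct (Nat.eq_dec i j) as [|Hne]; auto. exfalso.
    assert (Hp : V (map g1 I) (0, 0)).
    { exists (g1 i), (g1 j). repeat split; auto.
      - now apply in_map. - now apply in_map.
      - apply not_same; auto.
      - unfold on_line, g1; simpl; ring.
      - unfold on_line, g1; simpl; ring. }
    specialize (HV _ Hp). unfold closed_halfplane in HV; simpl in HV.
    destruct (Rlt_dec 0 c); lra.
Qed.
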